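(* Let $N\ge2$, $b_1,\dots,b_N\in\{0,1\}$ with $b_N=1$ and $\sum_j b_j2^{N-j}>1$, and let $\rho$ be the largest real root of $x^N-\sum_{j=1}^N b_jx^{N-j}$, so $1=\sum_{k=1}^N b_k\rho^{-k}$. Let $I_k=[0,\rho^{-k}]$, $1\le k\le N$. In dimension $1$, $\rho I_1=[0,1]$ is partitioned into the intervals $I_k$ with $b_k=1$ placed edge to edge, and $\rho I_k=I_{k-1}$ for $2\le k\le N$. For $d\ge1$, let the tiles be the boxes $I_{k_1}\times\cdots\times I_{k_d}$ (and their copies), and decompose each inflated box $\rho(I_{k_1}\times\cdots\times I_{k_d})=\rho I_{k_1}\times\cdots\times\rho I_{k_d}$ as the cartesian product of the one-dimensional decompositions of the factors. Then the tessellations of $\mathbb{R}^d$ constructed by inflation from these decompositions are aperiodic (not periodic).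
   Context: Sets are essentially disjoint if their intersection has Lebesgue measure $0$. A tessellation of $\mathbb{R}^d$ is a covering by pairwise essentially disjoint tiles of finitely many types; constructing by inflation means iterating the decomposition of the inflated tiles $\rho^n R$ to cover increasing regions of $\mathbb{R}^d$. A tessellation is periodic if it is invariant under translation by a lattice (a discrete additive subgroup of rank $d$) of $\mathbb{R}^d$. *)

(* Defs.v *)
From HB Require Import structures.
From mathcomp Require Import all_boot all_order all_algebra.
From mathcomp Require Import reals.
Set Implicit Arguments. Unset Strict Implicit. Unset Printing Implicit Defensive.
Import Order.TTheory GRing.Theory Num.Theory.
Local Open Scope ring_scope.

(* The polynomial x^N - sum_{j=1}^N b_j x^(N-j); b is 1-indexed (b j = b_j). *)
Definition inflation_poly (R : realFieldType) (N : nat) (b : nat -> bool) : {poly R} :=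
  'X^N - \sum_(1 <= j < N.+1) (b j)%:R *: 'X^(N - j).

(* A (labelled) tile in R^d: a type t (t i = k_i in {1..N}, the box being
   I_{k_1} x ... x I_{k_d}) and a translation vector x (its lower corner). *)
Definition tile (R : Type) (d : nat) := (('I_d -> nat) * ('I_d -> R))%type.

Definition tile_support (R : realFieldType) (d : nat) (rho : R) (T : tile R d)
  (y : 'I_d -> R) : Prop :=
  forall i, T.2 i <= y i <= T.2 i + rho ^- (T.1 i).

(* Position of I_j inside rho I_1 = [0,1]: the I_k with b_k = 1 placed edge to
   edge in increasing order of k, starting at 0. *)
Definition offset1 (R : realFieldType) (b : nat -> bool) (rho : R) (j : nat) : R :=
  \sum_(1 <= i < j) (b i)%:R * rho ^- i.

(* One-dimensional decomposition: rho I_k contains the child I_k' placed at o. *)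
Definition child1 (R : realFieldType) (N : nat) (b : nat -> bool) (rho : R)
  (k k' : nat) (o : R) : Prop :=
  (k = 1%N /\ (1 <= k' <= N)%N /\ b k' /\ o = offset1 b rho k')
  \/ ((2 <= k <= N)%N /\ k' = k.-1 /\ o = 0).

Definition childd (R : realFieldType) (N : nat) (b : nat -> bool) (rho : R) (d : nat)
  (t t' : 'I_d -> nat) (o : 'I_d -> R) : Prop :=
  forall i, child1 N b rho (t i) (t' i) (o i).

(* supertile n t x = the set of tiles obtained by iterating n times the
   decomposition of the inflated tile rho^n (x + B_t). *)
Fixpoint supertile (R : realFieldType) (N : nat) (b : nat -> bool) (rho : R) (d : nat)
  (n : nat) (t : 'I_d -> nat) (x : 'I_d -> R) : tile R d -> Prop :=
  match n with
  | 0 => fun T => T = (t, x)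
  | n'.+1 => fun T => exists t' o, childd N b rho t t' o /\
        supertile N b rho n' t' (fun i => rho * x i + o i) T
  end.

(* A tessellation (set of tiles) constructed by inflation: union of an
   increasing sequence of patches rho^n R_n (R_n a tile), decomposed n times,
   whose supports cover R^d. *)
Definition constructed_by_inflation (R : realFieldType) (N : nat) (b : nat -> bool)
  (rho : R) (d : nat) (Tl : tile R d -> Prop) : Prop :=
  exists (ts : nat -> 'I_d -> nat) (xs : nat -> 'I_d -> R),
    (forall n i, (1 <= ts n i <= N)%N) /\
    (forall n T, supertile N b rho n (ts n) (xs n) T ->
                 supertile N b rho n.+1 (ts n.+1) (xs n.+1) T) /\
    (forall T, Tl T <-> exists n, supertile N b rho n (ts n) (xs n) T) /\
    (forall y, exists T, Tl T /\ tile_support rho T y).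

(* A lattice of R^d: discrete additive subgroup of rank d. *)
Definition is_lattice (R : realFieldType) (d : nat) (L : ('I_d -> R) -> Prop) : Prop :=
  L (fun _ => 0) /\
  (forall u v, L u -> L v -> L (fun i => u i - v i)) /\
  (exists2 e : R, 0 < e & forall v, L v -> v <> (fun _ => 0) -> exists i, e <= `|v i|) /\
  (exists M : 'M[R]_d, (forall i, L (fun j => M i j)) /\ M \in unitmx).

Definition periodic (R : realFieldType) (d : nat) (Tl : tile R d -> Prop) : Prop :=
  exists L, is_lattice L /\
    forall v, L v -> forall (t : 'I_d -> nat) (x : 'I_d -> R),
      Tl (t, x) <-> Tl (t, fun i => x i + v i).

(* Main.v *)
Require Import Defs.
From HB Require Import structures.
From mathcomp Require Import all_boot all_order all_algebra.
From mathcomp Require Import reals ring lra zify.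
Import Order.TTheory GRing.Theory Num.Theory.
Local Open Scope ring_scope.
Set Implicit Arguments. Unset Strict Implicit.

Section OneD.
Variables (R : realType) (N : nat) (b : nat -> bool) (rho : R).
Hypothesis Hr : 1 < rho.
Hypothesis HbN : b N.
Hypothesis HN : (2 <= N)%N.
Hypothesis Hone : offset1 b rho N.+1 = 1.

Local Notation e k := (rho ^- k).
Local Notation off := (offset1 b rho).

Lemma rho_gt0 : 0 < rho. Proof. have := Hr; lra. Qed.
Lemma rho_neq0 : rho != 0. Proof. by rewrite gt_eqF // rho_gt0. Qed.
Lemma rexp_gt0 n : 0 < rho ^+ n. Proof. exact: exprn_gt0 rho_gt0. Qed.
Lemma e_gt0 k : 0 < e k. Proof. by rewrite invr_gt0 rexp_gt0. Qed.
Lemma eS k : rho * e k.+1 = e k.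
Proof.
rewrite exprSr invfM mulrCA mulfV ?mulr1 //; exact: rho_neq0.
Qed.
Lemma e_le1 k : e k <= 1.
Proof. by rewrite invf_le1 ?rexp_gt0 // exprn_ege1 // ltW. Qed.
Lemma e_mono k k' : (k <= k')%N -> e k' <= e k.
Proof.
move=> /subnK <-; elim: (k' - k)%N => [|n IH] //=.
rewrite addSn; apply: le_trans IH; rewrite -(eS (n + k)).
have := e_gt0 (n+k).+1; have := Hr; nra.
Qed.

Lemma off_small j : (j <= 1)%N -> off j = 0.
Proof. by move=> hj; rewrite /offset1 big_geq. Qed.
Lemma offS j : (1 <= j)%N -> off j.+1 = off j + (b j)%:R * e j.
Proof. by move=> hj; rewrite /offset1 big_nat_recr. Qed.
Lemma off_ge0 j : 0 <= off j.
Proof.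
rewrite /offset1; apply: sumr_ge0 => i _; apply: mulr_ge0 => //.
exact: ltW (e_gt0 i).
Qed.
Lemma off_mono j j' : (j <= j')%N -> off j <= off j'.
Proof.
move=> /subnK <-; elim: (j' - j)%N => [|n IH] //=.
rewrite addSn; case: (leqP (n + j) 0) => h.
  by rewrite !off_small //; lia.
rewrite offS //; apply: le_trans IH _; rewrite lerDl.
apply: mulr_ge0 => //; exact: ltW (e_gt0 _).
Qed.
Lemma off_step j j' : b j -> (1 <= j)%N -> (j < j')%N -> off j + e j <= off j'.
Proof.
move=> bj hj hjj; have h := offS hj; rewrite bj mul1r in h.
by rewrite -h off_mono.
Qed.

Lemma e0 : e 0 = 1. Proof. by rewrite expr0 invr1. Qed.
Lemma e1 : rho * e 1 = 1. Proof. by rewrite eS e0. Qed.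
Lemma off_lt1 j : b j -> (1 <= j <= N)%N -> off j + e j <= 1.
Proof. move=> bj /andP[h1 h2]; rewrite -Hone; apply: off_step => //. Qed.

Local Notation child1 := (child1 N b rho).

Definition dk (k : nat) : nat := if k == 1%N then N else k.-1.
Definition dof (k : nat) : R := if k == 1%N then off N else 0.

Lemma child_range k k' o : child1 k k' o -> (1 <= k' <= N)%N.
Proof. by case=> [[_ [h _]]|[h [-> _]]] //; lia. Qed.

Lemma child_def k : (1 <= k <= N)%N -> child1 k (dk k) (dof k).
Proof.
rewrite /dk /dof; case: eqP => [->|hk] hr; first by left; do !split => //; lia.
by right; do !split => //; lia.
Qed.

Lemma child_geom k k' o : child1 k k' o -> 0 <= o /\ o + e k' <= rho * e k.
Proof.
case=> [[-> [hk' [bk' ->]]]|[hk [-> ->]]].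
  by split; [exact: off_ge0 | rewrite e1; exact: off_lt1].
split => //; rewrite add0r; case: k hk => // k hk /=; rewrite eS //.
Qed.

Lemma child_N k o : (k <= N)%N -> child1 k N o -> k = 1%N /\ o = off N.
Proof. move=> hk; case=> [[-> [_ [_ ->]]]|[h [h' _]]] //; lia. Qed.

Lemma child_disj k k1 k2 o1 o2 (P y : R) : 0 < P -> child1 k k1 o1 -> child1 k k2 o2 ->
  P * o1 <= y < P * (o1 + e k1) -> P * o2 <= y < P * (o2 + e k2) -> k1 = k2 /\ o1 = o2.
Proof.
move=> hP c1 c2.
case: c1 => [[hk [r1 [b1 ->]]]|[hk [-> ->]]]; case: c2 => [[hk' [r2 [b2 ->]]]|[hk' [-> ->]]] //;
  try lia.
move=> /andP[h1 h1'] /andP[h2 h2'].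
case: (ltngtP k1 k2) => h; last by rewrite h.
- have := ler_wpM2l (ltW hP) (off_step b1 (proj1 (andP r1)) h); lra.
- have := ler_wpM2l (ltW hP) (off_step b2 (proj1 (andP r2)) h); lra.
Qed.

Lemma off_cover J w : 0 <= w < off J ->
  exists j, [/\ (1 <= j < J)%N, b j & off j <= w < off j + e j].
Proof.
elim: J => [|J IH] /andP[w0 wJ]; first by move: wJ; rewrite off_small //; lra.
case: (ltP w (off J)) => h.
  have [|j [h1 h2 h3]] := IH; first by rewrite w0 h.
  by exists j; split => //; lia.
case: (leqP J 0) => hJ; first by move: wJ; rewrite off_small; [lra|lia].
move: wJ; rewrite offS //; case bJ: (b J); last by rewrite mul0r addr0; lra.
rewrite mul1r => wJ; exists J; split => //; [lia | by rewrite h wJ].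
Qed.

Lemma child_cover k w : (1 <= k <= N)%N -> 0 <= w < rho * e k ->
  exists k' o, child1 k k' o /\ o <= w < o + e k'.
Proof.
move=> hk /andP[w0 w1]; case: (k =P 1%N) => [k1|k1].
  move: w1; rewrite k1 e1 -Hone => w1.
  have [j [hj bj hw]] := off_cover (J:=N.+1) (w:=w) ltac:(by rewrite w0 w1).
  exists j, (off j); split => //; left; do !split => //; lia.
exists k.-1, 0; split; first by right; do !split => //; lia.
move: w1; case: k hk k1 => // k hk k1; rewrite eS /= add0r => w1; by rewrite w0 w1.
Qed.

Fixpoint st (n : nat) (k : nat) (x : R) : nat * R -> Prop :=
  match n with
  | 0 => fun U => U = (k, x)
  | n'.+1 => fun U => exists k' o, child1 k k' o /\ st n' k' (rho * x + o) U
  end.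

Lemma st_range n k x U : (1 <= k <= N)%N -> st n k x U -> (1 <= U.1 <= N)%N.
Proof.
elim: n k x => [|n IH] k x hk /=; first by move=> ->.
by case=> k' [o [c h]]; apply: IH h; apply: child_range c.
Qed.

Lemma st_geom n k x U : (1 <= k <= N)%N -> st n k x U ->
  rho ^+ n * x <= U.2 /\ U.2 + e U.1 <= rho ^+ n * (x + e k).
Proof.
elim: n k x => [|n IH] k x hk /=; first by move=> ->; rewrite !expr0 !mul1r.
case=> k' [o [c h]]; have [h1 h2] := IH _ _ (child_range c) h.
have [o0 ok] := child_geom c; have P0 := rexp_gt0 n.
rewrite exprSr -!mulrA; split.
  apply: le_trans h1; apply: ler_wpM2l; [exact: ltW | lra].
apply: le_trans h2 _; apply: ler_wpM2l; [exact: ltW | lra].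
Qed.

Lemma st_cover n k x y : (1 <= k <= N)%N -> x <= y < x + e k ->
  exists U, st n k x U /\ U.2 <= rho ^+ n * y < U.2 + e U.1.
Proof.
elim: n k x y => [|n IH] k x y hk hy.
  by exists (k, x); split => //=; rewrite expr0 mul1r.
have [k' [o [c ho]]] : exists k' o, child1 k k' o /\ o <= rho * y - rho * x < o + e k'.
  apply: child_cover => //; move: hy => /andP[h1 h2].
  have := Hr; nra.
have [U [hU hU']] := IH k' (rho * x + o) (rho * y) (child_range c) ltac:(lra).
by exists U; split; [exists k', o | rewrite exprSr -mulrA].
Qed.

Lemma st_disj n k x U V y : (1 <= k <= N)%N -> st n k x U -> st n k x V ->
  U.2 <= y < U.2 + e U.1 -> V.2 <= y < V.2 + e V.1 -> U = V.
Proof.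
elim: n k x => [|n IH] k x hk /=; first by move=> -> ->.
case=> k1 [o1 [c1 h1]] [k2 [o2 [c2 h2]]] hU hV.
have [g1 g1'] := st_geom (child_range c1) h1.
have [g2 g2'] := st_geom (child_range c2) h2.
have P0 := rexp_gt0 n.
have [ek eo] : k1 = k2 /\ o1 = o2.
  apply: (child_disj (y := y - rho ^+ n * (rho * x)) P0 c1 c2).
    move: hU => /andP[u1 u2]; apply/andP; split; nra.
  move: hV => /andP[u1 u2]; apply/andP; split; nra.
by rewrite ek eo in h1; exact: IH (child_range c2) h1 h2 hU hV.
Qed.

Lemma st_snoc n k x U : st n.+1 k x U <->
  exists S, st n k x S /\ exists k' o, child1 S.1 k' o /\ U = (k', rho * S.2 + o).
Proof.
elim: n k x => [|n IH] k x.
  split => [[k' [o [c ->]]]|[S [-> [k' [o [c ->]]]]]]; last by exists k', o.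
  by exists (k, x); split => //; exists k', o.
split.
  case=> k' [o [c /IH [S [hS hU]]]]; exists S; split => //; by exists k', o.
case=> S [[k' [o [c hS]]] hU]; exists k', o; split => //; apply/IH; by exists S.
Qed.

Variables (ts : nat -> nat) (xs : nat -> R).
Hypothesis Hts : forall n, (1 <= ts n <= N)%N.
Hypothesis Hnest : forall n U, st n (ts n) (xs n) U -> st n.+1 (ts n.+1) (xs n.+1) U.
Hypothesis Hcov : forall y, exists n U, st n (ts n) (xs n) U /\ U.2 <= y <= U.2 + e U.1.

Definition Lvl m j U := st j (ts (m + j)) (xs (m + j)) U.
Definition lo m j := rho ^+ j * xs (m + j).
Definition hi m j := rho ^+ j * (xs (m + j) + e (ts (m + j))).

Lemma Lvl_range m j U : Lvl m j U -> (1 <= U.1 <= N)%N.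
Proof. exact: st_range. Qed.
Lemma Lvl_geom m j U : Lvl m j U -> lo m j <= U.2 /\ U.2 + e U.1 <= hi m j.
Proof. exact: st_geom. Qed.
Lemma Lvl_disj m j U V y : Lvl m j U -> Lvl m j V ->
  U.2 <= y < U.2 + e U.1 -> V.2 <= y < V.2 + e V.1 -> U = V.
Proof. exact: st_disj. Qed.
Lemma Lvl_cover m j y : lo m j <= y < hi m j ->
  exists U, Lvl m j U /\ U.2 <= y < U.2 + e U.1.
Proof.
move=> /andP[h1 h2]; have P0 := rexp_gt0 j.
have [|U [hU hy]] := st_cover j (y := y / rho ^+ j) (x := xs (m + j)) (Hts (m + j)).
  rewrite ler_pdivlMr // ltr_pdivrMr // ![_ * rho ^+ j]mulrC h1 /=.
  by move: h2; rewrite /hi.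
by exists U; split => //; move: hy; rewrite mulrC divfK // gt_eqF.
Qed.
Lemma Lvl_child m j S k' o : Lvl m.+1 j S -> child1 S.1 k' o -> Lvl m j.+1 (k', rho * S.2 + o).
Proof.
move=> hS c; rewrite /Lvl addnS -addSn; apply/st_snoc; exists S; split => //.
by exists k', o.
Qed.
Lemma Lvl_parent m j U : Lvl m j.+1 U ->
  exists S, Lvl m.+1 j S /\ exists k' o, child1 S.1 k' o /\ U = (k', rho * S.2 + o).
Proof. by rewrite /Lvl addnS -addSn => /st_snoc. Qed.

Lemma lo_shift m j : lo m j.+1 = rho * lo m.+1 j.
Proof. by rewrite /lo addnS -addSn exprS mulrA. Qed.
Lemma hi_shift m j : hi m j.+1 = rho * hi m.+1 j.
Proof. by rewrite /hi addnS -addSn exprS mulrA. Qed.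
Lemma lo_scale m j : rho ^+ m * lo m j = lo 0 (m + j).
Proof. by rewrite /lo mulrA -exprD add0n. Qed.
Lemma hi_scale m j : rho ^+ m * hi m j = hi 0 (m + j).
Proof. by rewrite /hi mulrA -exprD add0n. Qed.
Lemma lo_lt_hi m j : lo m j < hi m j.
Proof.
rewrite /lo /hi ltr_pM2l ?rexp_gt0 // ltrDl; exact: e_gt0.
Qed.

Lemma Lvl0_nest j U : Lvl 0 j U -> Lvl 0 j.+1 U.
Proof. exact: Hnest. Qed.

Lemma lo0_step j : lo 0 j.+1 <= lo 0 j.
Proof.
have [U [hU hy]] := Lvl_cover (m := 0) (j := j) (y := lo 0 j) ltac:(by rewrite lexx lo_lt_hi).
have [g1 _] := Lvl_geom (Lvl0_nest hU); move: hy => /andP[h1 _]; lra.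
Qed.
Lemma hi0_step j : hi 0 j <= hi 0 j.+1.
Proof.
case: (leP (lo 0 j) (hi 0 j.+1)) => h; rewrite leNgt; apply/negP => h'.
  have [U [hU /andP[h1 h2]]] := Lvl_cover (m := 0) (j := j) (y := hi 0 j.+1) ltac:(by rewrite h h').
  have [_ g2] := Lvl_geom (Lvl0_nest hU); lra.
have [U [hU /andP[h1 h2]]] := Lvl_cover (m := 0) (j := j) (y := lo 0 j) ltac:(by rewrite lexx lo_lt_hi).
have [_ g2] := Lvl_geom (Lvl0_nest hU); lra.
Qed.

Lemma lo_step m j : lo m j.+1 <= lo m j.
Proof.
rewrite -(ler_pM2l (rexp_gt0 m)) !lo_scale addnS; exact: lo0_step.
Qed.
Lemma hi_step m j : hi m j <= hi m j.+1.
Proof.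
rewrite -(ler_pM2l (rexp_gt0 m)) !hi_scale addnS; exact: hi0_step.
Qed.
Lemma lo_mono m j j' : (j <= j')%N -> lo m j' <= lo m j.
Proof.
move=> /subnK <-; elim: (j' - j)%N => [|n IH] //=.
rewrite addSn; apply: le_trans IH; exact: lo_step.
Qed.
Lemma hi_mono m j j' : (j <= j')%N -> hi m j <= hi m j'.
Proof.
move=> /subnK <-; elim: (j' - j)%N => [|n IH] //=.
rewrite addSn; apply: le_trans IH _; exact: hi_step.
Qed.

Lemma exh0 y : exists j0, forall j, (j0 <= j)%N -> lo 0 j <= y <= hi 0 j.
Proof.
have [n [U [hU /andP[h1 h2]]]] := Hcov y.
have [g1 g2] := Lvl_geom (m := 0) hU.
exists n => j hj; have := lo_mono 0 hj; have := hi_mono 0 hj.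
move=> a1 a2; apply/andP; split; lra.
Qed.
Lemma exh m y : exists j0, forall j, (j0 <= j)%N -> lo m j <= y <= hi m j.
Proof.
have [j0 H] := exh0 (rho ^+ m * y); exists j0 => j hj.
have /andP[h1 h2] := H (m + j)%N ltac:(lia).
by rewrite -(ler_pM2l (rexp_gt0 m)) lo_scale h1 -(ler_pM2l (rexp_gt0 m)) hi_scale h2.
Qed.
Lemma exh2 m a c : exists j0, forall j, (j0 <= j)%N -> lo m j <= a /\ c <= hi m j.
Proof.
have [j1 H1] := exh m a; have [j2 H2] := exh m c.
exists (maxn j1 j2) => j hj.
have /andP[h1 _] := H1 j ltac:(lia); have /andP[_ h2] := H2 j ltac:(lia); by [].
Qed.

Definition mu (m : nat) : R := m%:R * 3.
Lemma mu_ge0 m : 0 <= mu m. Proof. by rewrite /mu mulr_ge0 // ler0n. Qed.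
Lemma muS m : mu m.+1 = mu m + 3.
Proof. by rewrite /mu -addn1 natrD mulrDl mul1r. Qed.
Lemma rho_mu m : mu m + 3 <= rho * mu m.+1.
Proof. rewrite muS; have := mu_ge0 m; have := Hr; nra. Qed.

Definition deep m j U := lo m j + mu m <= U.2 /\ U.2 + e U.1 + mu m <= hi m j.
Lemma deep_mono m j j' U : (j <= j')%N -> deep m j U -> deep m j' U.
Proof.
move=> h [h1 h2]; have := lo_mono m h; have := hi_mono m h; rewrite /deep; lra.
Qed.

Definition Xm m U := exists j0, forall j, (j0 <= j)%N -> Lvl m j U.

Lemma canon_child m j s z : Lvl m.+1 j (s, z) -> Lvl m j.+1 (dk s, rho * z + dof s).
Proof.
move=> h; apply: (Lvl_child (S := (s, z))) => //; apply: child_def.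
exact: (Lvl_range h).
Qed.

Lemma parent_cases s z s' z' k' o : (1 <= s <= N)%N -> (1 <= s' <= N)%N ->
  child1 s' k' o -> (k', rho * z' + o) = (dk s, rho * z + dof s) ->
  (s' = s /\ z' = z) \/ [/\ (2 <= s)%N, s' = 1%N, b s.-1 & rho * z' + off s.-1 = rho * z].
Proof.
move=> hs hs' c [ek eo]; move: c; rewrite ek /dk /dof in eo *.
have rne := rho_neq0.
case: eqP => [s1|s1] in eo *.
  move=> c; have [|-> o1] := child_N _ c; first by case/andP: hs'.
  rewrite o1 in eo; left; split => //.
  by apply: (mulfI rne); move: eo; lra.
case=> [[-> [_ [bk o1]]]|[h2 [h3 o1]]]; rewrite o1 in eo.
  by right; split => //; [lia | move: eo; lra].
left; split; first lia.
by apply: (mulfI rne); move: eo; lra.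
Qed.

Lemma bad_contra m j s z : Lvl m.+1 j (s, z) -> (2 <= s)%N -> b s.-1 ->
  Lvl m j.+1 (N, rho * z - off s.-1 + off N) -> False.
Proof.
move=> hS hs bs /Lvl_parent [[s3 z3] [h3 [k' [o [c [ek eo]]]]]].
have r3 := Lvl_range h3; have rS := Lvl_range hS.
move: c; rewrite -ek => /child_N [|/= s31 o3]; first by case/andP: r3.
rewrite o3 in eo; simpl in s31; subst s3.
have lt1 := off_lt1 bs ltac:(simpl in rS; lia).
have eg := e_gt0 s.-1; have og := off_ge0 s.-1; have P := rho_gt0.
have E : (1%N, z3) = (s, z).
  apply: (Lvl_disj (y := z) h3 hS) => /=; apply/andP; split.
  - rewrite -(ler_pM2l P); lra.
  - rewrite -(ltr_pM2l P) mulrDr e1; lra.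
  - exact: lexx.
  - rewrite ltrDl; exact: e_gt0.
by case: E => ? _; lia.
Qed.

Lemma pred_range s : (2 <= s)%N -> (1 <= s <= N)%N -> (1 <= s.-1 <= N)%N.
Proof. lia. Qed.
Lemma N_range : (1 <= N <= N)%N.
Proof. have := HN; lia. Qed.

Lemma DN m : forall j U, Lvl m j U -> deep m j U -> Lvl m j.+1 U.
Proof.
elim: m => [|m IH] j [s z] hS hd; first exact: Lvl0_nest.
have rS : (1 <= s <= N)%N := Lvl_range hS.
have hK := canon_child hS.
have [c0 g0] : 0 <= dof s /\ dof s + e (dk s) <= rho * e s := child_geom (child_def rS).
have P := rho_gt0; have rm := rho_mu m; have mg := mu_ge0 m.
case: hd => /= [d1 d2].
have d1' := ler_wpM2l (ltW P) d1; have d2' := ler_wpM2l (ltW P) d2.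
have es := e_gt0 s; have es' := e_gt0 (dk s).
have hro : 0 <= rho * e s by apply: mulr_ge0; [exact: ltW|exact: ltW].
have Kd : deep m j.+1 (dk s, rho * z + dof s).
  rewrite /deep /= lo_shift hi_shift; split; (timeout 15 lra).
have hK2 := IH _ _ hK Kd.
have [[s' z'] [hS' [k' [o [c eK]]]]] := Lvl_parent hK2.
have rS' : (1 <= s' <= N)%N := Lvl_range hS'.
have c' : child1 s' k' o := c.
have eK' : (k', rho * z' + o) = (dk s, rho * z + dof s) := esym eK.
have [[E1 E2]|[hs2 s'1 bs ez]] := parent_cases rS rS' c' eK'.
  by rewrite -E1 -E2.
subst s'.
have cN : child1 1 N (off N).
  by left; split; [by [] | split; [by rewrite leqnn andbT; apply: leq_trans HN | by split]].
have hB : Lvl m j.+2 (N, rho * z' + off N) := Lvl_child (S := (1%N, z')) hS' cN.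
set y := rho * z' + off N in hB.
have lt1 := off_lt1 bs (pred_range hs2 rS).
have ltN := off_lt1 HbN N_range.
have eg := e_gt0 s.-1; have og := off_ge0 s.-1; have oN := off_ge0 N.
have eN := e_gt0 N.
have [V [hV hy]] := Lvl_cover (m := m) (j := j.+1) (y := y) ltac:(
  apply/andP; rewrite lo_shift hi_shift /y; split; (timeout 15 lra)).
have rV := Lvl_range hV; have eV := e_le1 V.1; have eV' := e_gt0 V.1.
have Vd : deep m j.+1 V.
  move: hy => /andP[y1 y2]; rewrite /deep lo_shift hi_shift /y in y1 y2 *; split; (timeout 15 lra).
have hV2 := IH _ _ hV Vd.
have EV : V = (N, y).
  apply: (Lvl_disj hV2 hB hy) => /=; rewrite lexx /= ltrDl; exact: e_gt0.
rewrite EV in hV.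
apply: False_ind; apply: (bad_contra hS hs2 bs).
by move: hV; rewrite /y; congr (Lvl _ _ (_, _)); (timeout 15 lra).
Qed.

Lemma deep_stable m j U : Lvl m j U -> deep m j U -> forall j', (j <= j')%N -> Lvl m j' U.
Proof.
move=> h d j' /subnK <-; elim: (j' - j)%N => [|n IH] //.
rewrite addSn; apply: DN => //; apply: deep_mono d; exact: leq_addl.
Qed.
Lemma deep_X m j U : Lvl m j U -> deep m j U -> Xm m U.
Proof. by move=> h d; exists j; apply: deep_stable. Qed.
Lemma ev_deep m U : exists j0, forall j, (j0 <= j)%N -> deep m j U.
Proof.
have [j0 H] := exh2 m (U.2 - mu m) (U.2 + e U.1 + mu m).
exists j0 => j hj; have [h1 h2] := H j hj; rewrite /deep; split; lra.
Qed.

Definition Per0 q := forall U, Xm 0 U -> Xm 0 (U.1, U.2 + q).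

Lemma Inv m : forall q, Per0 q -> Per0 (- q) ->
  forall U, Xm m U -> Xm m (U.1, U.2 + q / rho ^+ m).
Proof.
elim: m => [|m IH] q P1 P2 [s z] [j0 H0].
  by rewrite expr0 divr1; apply: P1; exists j0.
set qm := q / rho ^+ m; set q' := q / rho ^+ m.+1.
have eq' : rho * q' = qm.
  have rn := rho_neq0; have rm := expf_neq0 m rn.
  rewrite /q' /qm exprSr; field; by rewrite ?rn ?rm.
have rS : (1 <= s <= N)%N := Lvl_range (H0 j0 (leqnn _)).
have XK : Xm m (dk s, rho * z + dof s).
  exists j0.+1 => -[|j] hj //; apply: canon_child; exact: H0.
have [j1 H1] := IH q P1 P2 _ XK; rewrite -/qm /= in H1.
set w := rho * (z + q') - off s.-1 + off N.
have [j2 H2] := ev_deep m (N, w).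
exists (maxn j1 j2) => j hj.
have hK := H1 j.+1 (leq_trans (leq_maxl _ _) (leqW hj)).
have [[s' z'] [hS' [k' [o [c eK]]]]] := Lvl_parent hK.
have rS' : (1 <= s' <= N)%N := Lvl_range hS'.
have c' : child1 s' k' o := c.
have eK' : (k', rho * z' + o) = (dk s, rho * (z + q') + dof s).
  by move: eK => /= -[<- <-]; rewrite mulrDr eq' addrAC.
have [[E1 E2]|[hs2 s'1 bs ez]] := parent_cases rS rS' c' eK'.
  by rewrite -E1 -E2.
subst s'.
have cN : child1 1 N (off N).
  by left; split; [by [] | split; [by rewrite leqnn andbT; apply: leq_trans HN | by split]].
have hB : Lvl m j.+1 (N, rho * z' + off N) := Lvl_child (S := (1%N, z')) hS' cN.
have EB : rho * z' + off N = w by rewrite /w -ez; lra.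
rewrite EB in hB.
have XB : Xm m (N, w).
  apply: (deep_X hB); apply: H2; apply: leq_trans (leq_maxr _ _) (leqW hj).
have P2' : Per0 (- - q) by rewrite opprK.
have [j3 H3] := IH (- q) P2 P2' _ XB.
set jj := maxn j3 j0.
have hB' := H3 jj.+1 (leq_trans (leq_maxl _ _) (leqW (leqnn _))).
apply: False_ind; apply: (bad_contra (H0 jj (leq_maxr _ _)) hs2 bs).
move: hB'; congr (Lvl _ _ (_, _)); rewrite /= /w mulNr -/qm -eq' mulrDr; lra.
Qed.

Lemma bern m : 1 + m%:R * (rho - 1) <= rho ^+ m.
Proof.
elim: m => [|m IH]; first by rewrite mul0r addr0 expr0.
rewrite exprSr -addn1 natrD mulrDl mul1r.
have r1 : 0 <= rho - 1 by have := Hr; lra.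
have := ler_wpM2r (ltW rho_gt0) IH.
have := mulr_ge0 (mulr_ge0 (ler0n R m) r1) r1.
nra.
Qed.

Lemma big_pow C : exists m, C < rho ^+ m.
Proof.
have h : 0 <= `|C| / (rho - 1) by apply: divr_ge0 => //; have := Hr; lra.
have := archi_boundP h; set m := Num.Def.archi_bound _ => hm.
exists m; have := bern m; have := ler_norm C.
rewrite ltr_pdivrMr in hm; last by have := Hr; lra.
lra.
Qed.

Lemma aperiodic1 (p : R) : p != 0 -> Per0 p -> Per0 (- p) -> False.
Proof.
move=> p0 P1 P2.
have [m hm] := big_pow ((p * p + 1) * rho ^+ N).
set A := rho ^+ m; set B := rho ^+ N.
have hm' : (p * p + 1) * B < A := hm.
have A0 : 0 < A := rexp_gt0 m; have B0 : 0 < B := rexp_gt0 N.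
set q := p / A.
have hq : q * A = p by rewrite /q divfK // gt_eqF.
have hB : e N * B = 1 by rewrite mulVf // gt_eqF.
have AB0 : 0 < A * B by apply: mulr_gt0.
have pa : p <= p * p + 1 by nra.
have pa' : - p <= p * p + 1 by nra.
have qlt : q < e N.
  have H : (e N - q) * (A * B) = A - p * B.
    transitivity (e N * B * A - q * A * B); first by ring.
    by rewrite hB hq mul1r.
  have pb := ler_wpM2r (ltW B0) pa.
  have : 0 < A - p * B by lra.
  by rewrite -H pmulr_lgt0 // subr_gt0.
have qgt : - e N < q.
  have H : (e N + q) * (A * B) = A + p * B.
    transitivity (e N * B * A + q * A * B); first by ring.
    by rewrite hB hq mul1r.
  have pb := ler_wpM2r (ltW B0) pa'.
  have : 0 < A + p * B by lra.
  by rewrite -H pmulr_lgt0 // => h; lra.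
have [j hj] := exh2 m (- (mu m + 2)) (mu m + 2).
have [h1 h2] := hj j (leqnn _).
have mg := mu_ge0 m.
have [V [hV /andP[v1 v2]]] := Lvl_cover (m := m) (j := j) (y := 0) ltac:(apply/andP; split; lra).
have eV := e_le1 V.1; have eV' := e_gt0 V.1.
have XV : Xm m V by apply: (deep_X hV); rewrite /deep; split; lra.
have XV' := Inv P1 P2 XV; rewrite -/A -/q in XV'.
case: XV => [ja Ha]; case: XV' => [jb Hb].
set jj := maxn ja jb.
have La := Ha jj (leq_maxl _ _); have Lb := Hb jj (leq_maxr _ _).
have eNV : e V.1 >= e N by apply: e_mono; case/andP: (Lvl_range hV).
have E : V = (V.1, V.2 + q).
  case: (lerP 0 q) => hq0.
    apply: (Lvl_disj (y := V.2 + q) La Lb) => /=; apply/andP; split; lra.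
  apply: (Lvl_disj (y := V.2) La Lb) => /=; apply/andP; split; lra.
have q0 : q = 0.
  by case: V E {hV v1 v2 eV eV' La Lb eNV Ha Hb} => k x /= [E]; lra.
move: hq; rewrite q0 mul0r => /esym p00; move: p0; rewrite p00 eqxx //.
Qed.

End OneD.

Section Glue.
Variables (R : realType) (N : nat) (b : nat -> bool) (rho : R) (d : nat).
Hypothesis Hr : 1 < rho.
Hypothesis HbN : b N.
Hypothesis HN : (2 <= N)%N.

Lemma proj_st n (t : 'I_d -> nat) (x : 'I_d -> R) T i :
  supertile N b rho n t x T -> st N b rho n (t i) (x i) (T.1 i, T.2 i).
Proof.
elim: n t x => [|n IH] t x /=; first by move=> ->.
case=> t' [o [c h]]; exists (t' i), (o i); split; first exact: c.
exact: IH h.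
Qed.

Lemma lift_st n (t : 'I_d -> nat) (x : 'I_d -> R) i U :
  (forall j, (1 <= t j <= N)%N) -> st N b rho n (t i) (x i) U ->
  exists T, supertile N b rho n t x T /\ (T.1 i, T.2 i) = U.
Proof.
elim: n t x U => [|n IH] t x U ht /=; first by move=> ->; exists (t, x).
case=> k' [o [c h]].
pose t' := fun j => if j == i then k' else dk N (t j).
pose o' := fun j => if j == i then o else dof N b rho (t j).
have c' : childd N b rho t t' o'.
  move=> j; rewrite /t' /o'; case: eqP => [->//|_]; exact: child_def.
have ht' : forall j, (1 <= t' j <= N)%N.
  move=> j; rewrite /t'; case: eqP => _; first exact: child_range c.
  exact: child_range (child_def Hr HbN HN (ht j)).
have h' : st N b rho n (t' i) ((fun j => rho * x j + o' j) i) U.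
  by rewrite /t' /o' eqxx.
have [T [hT hTU]] := IH t' (fun j => rho * x j + o' j) U ht' h'.
by exists T; split => //; exists t', o'.
Qed.

End Glue.

Lemma horner_infl (R : realType) N b (x : R) :
  (inflation_poly R N b).[x] = x ^+ N - \sum_(1 <= j < N.+1) (b j)%:R * x ^+ (N - j).
Proof.
rewrite /inflation_poly hornerD hornerN hornerXn horner_sum; congr (_ - _).
by apply: eq_bigr => j _; rewrite hornerZ hornerXn.
Qed.

Lemma sum_b_ge2 N (b : nat -> bool) : (1 <= N)%N -> b N ->
  (1 < \sum_(1 <= j < N.+1) b j * 2 ^ (N - j))%N -> (1 < \sum_(1 <= j < N.+1) b j)%N.
Proof.
move=> hN bN; rewrite !big_nat_recr //= bN subnn expn0 muln1 => h.
have : (\sum_(1 <= j < N) b j * 2 ^ (N - j) <= (\sum_(1 <= j < N) b j) * 2 ^ N)%N.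
  rewrite big_distrl /=; apply: leq_sum => j _; rewrite leq_mul2l.
  by case: (b j) => //=; rewrite leq_pexp2l // leq_subr.
lia.
Qed.

Lemma rho_gt1 (R : realType) N (b : nat -> bool) (rho : R) : (2 <= N)%N -> b N ->
  (1 < \sum_(1 <= j < N.+1) b j * 2 ^ (N - j))%N ->
  (forall x : R, root (inflation_poly R N b) x -> x <= rho) -> 1 < rho.
Proof.
move=> hN bN hs hmax.
have h2 := sum_b_ge2 (ltnW hN) bN hs.
set p := inflation_poly R N b.
have p1 : p.[1] < 0.
  rewrite /p horner_infl expr1n.
  under eq_bigr do rewrite expr1n mulr1.
  rewrite -natr_sum subr_lt0 (_ : 1 = 1%:R) // ltr_nat; exact: h2.
set c : R := N.+1%:R.
have c1 : 1 <= c by rewrite /c ler1n.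
have pc : 0 <= p.[c].
  rewrite /p horner_infl subr_ge0.
  have -> : (N = N.-1.+1)%N by lia.
  apply: (@le_trans _ _ (\sum_(1 <= j < N.-1.+2) c ^+ N.-1)).
    rewrite big_nat_cond [X in _ <= X]big_nat_cond; apply: ler_sum => j /andP[/andP[j1 j2] _].
    case: (b j) => /=; last by rewrite mul0r exprn_ge0 // (le_trans ler01 c1).
    rewrite mul1r; apply: ler_weXn2l => //; lia.
  rewrite sumr_const_nat exprS -mulr_natr subn1 /= /c.
  rewrite [X in X <= _]mulrC; apply: ler_wpM2r.
    by rewrite exprn_ge0 ?ler0n.
  have hh : (N.-1.+1 <= N.+1)%N by lia.
  by rewrite (ler_nat R).
have [x /andP[x1 x2] rx] := poly_ivt c1 (introT andP (conj (ltW p1) pc)).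
have : x != 1 by apply: contraTneq rx => ->; rewrite /root (lt_eqF p1).
move=> xn1; have hx := hmax x rx; have x1' : 1 < x by rewrite lt_def xn1 x1.
exact: lt_le_trans x1' hx.
Qed.

Lemma Hone_of_root (R : realType) N (b : nat -> bool) (rho : R) : 1 < rho ->
  root (inflation_poly R N b) rho -> offset1 b rho N.+1 = 1.
Proof.
move=> hr /rootP; rewrite horner_infl => /eqP; rewrite subr_eq0 => /eqP h.
have r0 : rho != 0 by rewrite gt_eqF // (lt_trans ltr01 hr).
have rN : rho ^+ N != 0 by rewrite expf_neq0.
apply: (mulIf rN); rewrite mul1r {2}h /offset1 big_distrl /=.
apply: eq_big_nat => j /andP[_ hj]; rewrite -mulrA; congr (_ * _).
rewrite (expfB_cond (x := rho)); first by rewrite mulrC.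
by rewrite (negbTE r0) add0n -ltnS.
Qed.

Unset Implicit Arguments. Set Strict Implicit.

Lemma X_Xm0 (R : realType) N b (rho : R) ts xs
  (Hnest : forall n U, st N b rho n (ts n) (xs n) U -> st N b rho n.+1 (ts n.+1) (xs n.+1) U)
  n U : st N b rho n (ts n) (xs n) U -> Xm N b rho ts xs 0 U.
Proof.
move=> h; exists n => j /subnK <-; rewrite /Lvl add0n.
elim: (j - n)%N => [|k IH] //; rewrite addSn; exact: Hnest.
Qed.

Lemma mx_nz_entry (R : realType) d (M : 'M[R]_d) : (1 <= d)%N -> M \in unitmx ->
  exists r c, M r c != 0.
Proof.
move=> hd hM.
have M0 : M != 0.
  apply: contraTneq hM => ->; rewrite unitmxE.
  rewrite -(scale0r (1%:M : 'M[R]_d)) detZ det1 mulr1 expr0n.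
  by case: d hd {M} => //= d _; rewrite unitr0.
have : [exists r, [exists c, M r c != 0]].
  case/boolP: [exists r, [exists c, M r c != 0]] => // /existsPn H.
  move/eqP: M0 => []; apply/matrixP => r c; rewrite mxE.
  by move: (H r) => /existsPn /(_ c) /negPn /eqP.
by case/existsP => r /existsP [c h]; exists r, c.
Qed.

Arguments mx_nz_entry {R d M}.
Arguments X_Xm0 {R N b rho ts xs} Hnest {n U}.

Theorem mainTheorem9 (R : realType) (N : nat) (b : nat -> bool) (rho : R)
  (d : nat) (Tl : tile R d -> Prop) :
  (2 <= N)%N -> b N ->
  (1 < \sum_(1 <= j < N.+1) b j * 2 ^ (N - j))%N ->
  root (inflation_poly R N b) rho ->
  (forall x : R, root (inflation_poly R N b) x -> x <= rho) ->
  (1 <= d)%N ->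
  constructed_by_inflation N b rho Tl ->
  ~ periodic Tl.
Proof.
move=> HN HbN Hsum Hroot Hmax Hd [ts [xs [Hts [Hnest [HTl Hcov]]]]]
  [L [[L0 [Lsub [_ [M [HLM HMu]]]]] Hper]].
have Hr := rho_gt1 HN HbN Hsum Hmax.
have Hone := Hone_of_root Hr Hroot.
have [r [i0 hrc]] := mx_nz_entry Hd HMu.
pose v := fun j => M r j.
have Lv : L v := HLM r.
have Lnv : L (fun j => 0 - v j) := Lsub _ _ L0 Lv.
pose ts1 := fun n => ts n i0.
pose xs1 := fun n => xs n i0.
have Hts1 : forall n, (1 <= ts1 n <= N)%N by move=> n; exact: Hts n i0.
have Hnest1 : forall n U, st N b rho n (ts1 n) (xs1 n) U ->
    st N b rho n.+1 (ts1 n.+1) (xs1 n.+1) U.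
  move=> n U hU; have [T [hT <-]] := lift_st Hr HbN HN (x := xs n) (Hts n) hU.
  exact: proj_st i0 (Hnest n T hT).
have Hcov1 : forall y, exists n U, st N b rho n (ts1 n) (xs1 n) U /\
    U.2 <= y <= U.2 + rho ^- U.1.
  move=> y; have [T [hT hs]] := Hcov (fun _ => y).
  have [n hn] := (HTl T).1 hT.
  exists n, (T.1 i0, T.2 i0); split; [exact: proj_st i0 hn | exact: hs i0].
have Tr : forall w : 'I_d -> R, (forall t x, Tl (t, x) -> Tl (t, fun i => x i + w i)) ->
    Per0 N b rho ts1 xs1 (w i0).
  move=> w Hw U [j0 Hj].
  have hU : st N b rho j0 (ts1 j0) (xs1 j0) U by have := Hj j0 (leqnn _); rewrite /Lvl add0n.
  have [[t x] [hT EU]] := lift_st Hr HbN HN (x := xs j0) (Hts j0) hU.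
  have [n hn] := (HTl _).1 (Hw t x ((HTl _).2 (ex_intro _ j0 hT))).
  apply: (X_Xm0 Hnest1 (n := n)); rewrite -EU /=.
  exact: (proj_st i0 hn).
have P1 : Per0 N b rho ts1 xs1 (v i0).
  by apply: Tr => t x; apply: (proj1 (Hper v Lv t x)).
have P2 : Per0 N b rho ts1 xs1 (- v i0).
  by rewrite -sub0r; apply: (Tr (fun j => 0 - v j)) => t x; apply: (proj1 (Hper _ Lnv t x)).
exact: (aperiodic1 Hr HbN HN Hone Hts1 Hnest1 Hcov1 hrc P1 P2).
Qed.
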